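(* Let $N\ge 4$ be an integer. Suppose $w\in C^2([0,\infty))$ satisfies $$-w''(t)+(N-2)w'(t)+(N-1)w(t)=\frac{N-1}{2}\,e^{-t}\,w(t)^2\qquad\text{for all }t\ge 0,$$ together with $w'(0)-(N-1)w(0)=0$ and $\lim_{t\to+\infty}w(t)=0$. Then $w\equiv 0$.
   Context: This is the radial Navier problem (after the substitutions $v=u'$, $w(t)=-v(e^{-t})$) for $\Delta^2u=S_2[u]$ in the unit ball of $\mathbb{R}^N$ with $u=\Delta u=0$ on the boundary, where $S_2[u]$ is the sum of the $2\times2$ principal minors of the Hessian matrix of $u$; this is the case $k=2$, $\lambda=0$. *)

(* Defs.v *)
From Stdlib Require Import Reals.
From Coquelicot Require Import Coquelicot.
Open Scope R_scope.

Definition deriv_on_halfline (f f' : R -> R) : Prop :=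
  (forall t, 0 < t -> is_derive f t (f' t)) /\
  filterlim (fun h => (f h - f 0) / h) (at_right 0) (locally (f' 0)).

Definition cont_on_halfline (f : R -> R) : Prop :=
  (forall t, 0 < t -> continuous f t) /\
  filterlim f (at_right 0) (locally (f 0)).

Definition C2_halfline (w w1 w2 : R -> R) : Prop :=
  deriv_on_halfline w w1 /\ deriv_on_halfline w1 w2 /\ cont_on_halfline w2.

(* Main.v *)
Require Import Defs.
From Stdlib Require Import Reals Lra Psatz Lia.
From Coquelicot Require Import Coquelicot.
Open Scope R_scope.

Lemma D_mult (f g : R -> R) x df dg : is_derive f x df -> is_derive g x dg ->
  is_derive (fun t => f t * g t) x (df * g x + f x * dg).
Proof. intros H1 H2. apply (is_derive_mult f g x df dg H1 H2). intros; apply Rmult_comm. Qed.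

Lemma D_plus (f g : R -> R) x df dg : is_derive f x df -> is_derive g x dg ->
  is_derive (fun t => f t + g t) x (df + dg).
Proof. intros H1 H2. apply (is_derive_plus f g x df dg H1 H2). Qed.

Lemma D_opp (f : R -> R) x df : is_derive f x df ->
  is_derive (fun t => - f t) x (- df).
Proof. intros H1. apply (is_derive_opp f x df H1). Qed.

Lemma D_exp k x : is_derive (fun t => exp (k * t)) x (k * exp (k * x)).
Proof. auto_derive; auto; ring. Qed.

Lemma D_eq (f : R -> R) (x l l' : R) : is_derive f x l -> l = l' -> is_derive f x l'.
Proof. intros H ->; exact H. Qed.

Lemma rlim_eq (f : R -> R) (l l' : R) : filterlim f (at_right 0) (locally l) -> l = l' ->
  filterlim f (at_right 0) (locally l').
Proof. intros H ->; exact H. Qed.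

Lemma rlim_mult (f g : R -> R) (lf lg : R) :
  filterlim f (at_right 0) (locally lf) -> filterlim g (at_right 0) (locally lg) ->
  filterlim (fun x => f x * g x) (at_right 0) (locally (lf * lg)).
Proof.
  intros H1 H2. apply (filterlim_comp_2 f g Rmult H1 H2). apply (filterlim_mult lf lg).
Qed.

Lemma rlim_plus (f g : R -> R) (lf lg : R) :
  filterlim f (at_right 0) (locally lf) -> filterlim g (at_right 0) (locally lg) ->
  filterlim (fun x => f x + g x) (at_right 0) (locally (lf + lg)).
Proof.
  intros H1 H2. apply (filterlim_comp_2 f g Rplus H1 H2). apply (filterlim_plus lf lg).
Qed.

Lemma rlim_const c : filterlim (fun _ : R => c) (at_right 0) (@locally R_UniformSpace c).
Proof. apply filterlim_const. Qed.

Lemma rlim_id : filterlim (fun x : R => x) (at_right 0) (@locally R_UniformSpace 0).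
Proof. eapply filterlim_filter_le_1. apply filter_le_within. apply filterlim_id. Qed.

Lemma rlim_exp k : filterlim (fun x => exp (k * x)) (at_right 0) (@locally R_UniformSpace 1).
Proof.
  rewrite <- exp_0.
  apply (filterlim_comp _ _ _ (fun x => k * x) exp _ (@locally R_UniformSpace 0)).
  - apply rlim_eq with (k * 0). apply rlim_mult. apply rlim_const. apply rlim_id. apply Rmult_0_r.
  - apply continuous_exp.
Qed.

Lemma at_right_ex (P : R -> Prop) : at_right 0 P -> exists d, 0 < d /\ forall y, 0 < y < d -> P y.
Proof.
  intros [e He]. exists e. split. apply cond_pos. intros y Hy. apply He.
  unfold ball; simpl; unfold AbsRing_ball, abs, minus, plus, opp; simpl.
  rewrite Ropp_0, Rplus_0_r, Rabs_pos_eq; lra. lra.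
Qed.

Lemma rlim_ev (f : R -> R) l (eps : posreal) : filterlim f (at_right 0) (locally l) ->
  exists d, 0 < d /\ forall y, 0 < y < d -> Rabs (f y - l) < eps.
Proof.
  intros H. apply at_right_ex. apply (H (ball l eps) (locally_ball _ _)).
Qed.

Lemma rcont_of_deriv (w w1 : R -> R) :
  filterlim (fun h => (w h - w 0) / h) (at_right 0) (locally (w1 0)) ->
  filterlim w (at_right 0) (locally (w 0)).
Proof.
  intros H.
  apply filterlim_ext_loc with (fun h => w 0 + h * ((w h - w 0) / h)).
  - exists (mkposreal 1 Rlt_0_1). intros y _ Hy. simpl in Hy. field. lra.
  - apply rlim_eq with (w 0 + 0 * w1 0); [|ring].
    apply rlim_plus. apply rlim_const. apply rlim_mult. apply rlim_id. exact H.
Qed.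

Lemma mono_pos (F dF : R -> R) : (forall t, 0 < t -> is_derive F t (dF t)) ->
  (forall t, 0 < t -> 0 <= dF t) -> forall s t, 0 < s -> s <= t -> F s <= F t.
Proof.
  intros HD Hp s t Hs Hst.
  destruct (MVT_gen F s t dF) as [c [Hc Heq]].
  - intros x Hx. apply HD. rewrite Rmin_left in Hx; lra.
  - intros x Hx. rewrite Rmin_left in Hx by lra. apply continuity_pt_filterlim.
    apply (ex_derive_continuous F x). eexists. apply HD. lra.
  - rewrite Rmin_left in Hc by lra.
    assert (0 <= dF c) by (apply Hp; lra). nra.
Qed.

Lemma mono_0 (F dF : R -> R) : (forall t, 0 < t -> is_derive F t (dF t)) ->
  (forall t, 0 < t -> 0 <= dF t) -> filterlim F (at_right 0) (locally (F 0)) ->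
  forall t, 0 <= t -> F 0 <= F t.
Proof.
  intros HD Hp Hc t Ht.
  destruct (Req_dec t 0) as [->|Hne]; [lra|].
  destruct (Rle_lt_dec (F 0) (F t)) as [|Hlt]; [auto|].
  assert (He : 0 < F 0 - F t) by lra.
  destruct (rlim_ev F (F 0) (mkposreal _ He) Hc) as [d [Hd Hy]].
  set (y := Rmin (t/2) (d/2)).
  assert (Hy1 : 0 < y) by (unfold y; apply Rmin_pos; lra).
  assert (Hy2 : y <= t/2) by apply Rmin_l.
  assert (Hy3 : y <= d/2) by apply Rmin_r.
  specialize (Hy y ltac:(lra)). simpl in Hy.
  assert (F y <= F t) by (apply (mono_pos F dF); auto; lra).
  apply Rabs_def2 in Hy. lra.
Qed.

Lemma lim_inf (w : R -> R) : is_lim w p_infty 0 ->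
  forall eps, 0 < eps -> exists M, forall t, M < t -> Rabs (w t) < eps.
Proof.
  intros H e He. set (eps := mkposreal e He).
  destruct (H (ball 0 eps) (locally_ball _ _)) as [M HM]. exists M. intros t Ht.
  specialize (HM t Ht).
  unfold ball in HM; simpl in HM. unfold AbsRing_ball, abs, minus, plus, opp in HM; simpl in HM.
  rewrite Ropp_0, Rplus_0_r in HM. exact HM.
Qed.

Lemma drift (w w1 : R -> R) T e : 0 < T -> 0 < e ->
  (forall t, 0 < t -> is_derive w t (w1 t)) ->
  (forall t, T <= t -> Rabs (w t) < e) -> (forall t, T <= t -> e < w1 t) -> False.
Proof.
  intros HT He HD Hw Hw1.
  destruct (MVT_gen w T (T+4) w1) as [c [Hc Heq]].
  - intros x Hx. apply HD. rewrite Rmin_left in Hx; lra.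
  - intros x Hx. rewrite Rmin_left in Hx by lra. apply continuity_pt_filterlim.
    apply (ex_derive_continuous w x). eexists. apply HD. lra.
  - rewrite Rmin_left in Hc by lra. rewrite Rmax_right in Hc by lra.
    assert (e < w1 c) by (apply Hw1; lra).
    assert (A1 := Hw T ltac:(lra)). assert (A2 := Hw (T+4) ltac:(lra)).
    apply Rabs_def2 in A1. apply Rabs_def2 in A2. nra.
Qed.

Lemma mono_all (F dF : R -> R) : (forall t, 0 < t -> is_derive F t (dF t)) ->
  (forall t, 0 < t -> 0 <= dF t) -> filterlim F (at_right 0) (locally (F 0)) ->
  forall s t, 0 <= s -> s <= t -> F s <= F t.
Proof.
  intros HD Hp Hc s t Hs Hst.
  destruct (Req_dec s 0) as [->|Hne].
  - apply (mono_0 F dF); auto.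
  - apply (mono_pos F dF); auto; lra.
Qed.

Lemma rlim_opp (f : R -> R) (l : R) : filterlim f (at_right 0) (locally l) ->
  filterlim (fun x => - f x) (at_right 0) (locally (- l)).
Proof.
  intros H. apply (filterlim_comp _ _ _ f Ropp _ (@locally R_UniformSpace l)). exact H.
  apply (filterlim_opp l).
Qed.

Lemma exp_inv_id x : exp x * exp (- x) = 1.
Proof. rewrite <- exp_plus. replace (x + - x) with 0 by ring. apply exp_0. Qed.

Theorem theorem3p4 (N : nat) (w w1 w2 : R -> R) :
  (4 <= N)%nat ->
  C2_halfline w w1 w2 ->
  (forall t, 0 <= t ->
     - w2 t + (INR N - 2) * w1 t + (INR N - 1) * w t
       = (INR N - 1) / 2 * exp (- t) * (w t) ^ 2) ->
  w1 0 - (INR N - 1) * w 0 = 0 ->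
  is_lim w p_infty 0 ->
  forall t, 0 <= t -> w t = 0.
Proof.
  intros HN [[Dw Dw0] [[Dw1 Dw10] _]] Heq Hbc Hlim.
  assert (Hn : 4 <= INR N) by (replace 4 with (INR 4) by (simpl; ring); apply le_INR; lia).
  set (a := INR N - 1) in *.
  assert (Ha : 3 <= a) by (unfold a; lra).
  assert (Hw2 : forall t, 0 <= t -> w2 t = (a-1)*w1 t + a*w t - a/2*exp(-t)*(w t*w t)).
  { intros t ht. specialize (Heq t ht). replace ((w t)^2) with (w t * w t) in Heq by ring.
    replace (INR N - 2) with (a - 1) in Heq by (unfold a; ring). lra. }
  assert (Hbc' : w1 0 = a * w 0) by lra.
  clear Heq Hbc. clearbody a.
  assert (RCw := rcont_of_deriv w w1 Dw0).
  assert (RCw1 := rcont_of_deriv w1 w2 Dw10).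
  pose (G := fun t => - (exp (- a * t) * (w1 t + w t))).
  pose (dG := fun t => a/2*exp(- a * t)*exp(-t)*(w t*w t)).
  assert (DG : forall t, 0 < t -> is_derive G t (dG t)).
  { intros t ht. unfold G, dG.
    eapply D_eq. apply D_opp. apply D_mult. apply D_exp. apply D_plus. apply Dw1; lra. apply Dw; lra.
    rewrite Hw2 by lra. ring. }
  assert (PG : forall t, 0 < t -> 0 <= dG t).
  { intros t ht. unfold dG. assert (0 < exp (-a*t)) by apply exp_pos.
    assert (0 < exp (-t)) by apply exp_pos. assert (0 <= w t * w t) by nra.
    apply Rmult_le_pos; [|auto]. apply Rmult_le_pos; [|lra]. apply Rmult_le_pos; lra. }
  assert (RCG : filterlim G (at_right 0) (locally (G 0))).
  { unfold G. apply rlim_opp. apply rlim_eq with (1 * (w1 0 + w 0)).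
    apply rlim_mult. apply rlim_exp. apply rlim_plus; auto.
    rewrite Rmult_0_r, exp_0. ring. }
  assert (MG := mono_all G dG DG PG RCG).
  assert (Hz : forall t, 0 <= t -> 0 <= w1 t + w t).
  { intros t0 Ht0. destruct (Rle_lt_dec 0 (w1 t0 + w t0)) as [|Hneg]; auto. exfalso.
    set (d := - (w1 t0 + w t0)).
    assert (Hd : 0 < d) by (unfold d; lra).
    assert (Hzt : forall t, t0 <= t -> w1 t + w t <= - d).
    { intros t Ht. assert (HG := MG t0 t Ht0 Ht). unfold G in HG.
      assert (E1 := exp_inv_id (a*t)).
      replace (- (a*t)) with (- a * t) in E1 by ring.
      assert (E2 : 1 <= exp (a*t) * exp (- a * t0)).
      { rewrite <- exp_plus. assert (H1 := exp_ineq1_le (a * t + - a * t0)). nra. }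
      assert (Ep := exp_pos (a*t)).
      assert (HG2 : exp (a*t) * (exp (-a*t) * (w1 t + w t)) <= exp (a*t) * (exp (-a*t0) * (w1 t0 + w t0))).
      { apply Rmult_le_compat_l; lra. }
      replace (exp (a*t) * (exp (-a*t) * (w1 t + w t))) with (w1 t + w t) in HG2
        by (rewrite <- Rmult_assoc, E1; ring).
      rewrite <- Rmult_assoc in HG2. unfold d. nra. }
    destruct (lim_inf w Hlim (d/2) ltac:(lra)) as [M HM].
    set (T := Rmax M t0 + 1).
    assert (T1 : M < T) by (unfold T; assert (H := Rmax_l M t0); lra).
    assert (T2 : t0 < T) by (unfold T; assert (H := Rmax_r M t0); lra).
    apply (drift (fun t => - w t) (fun t => - w1 t) T (d/2)); try lra.
    - intros t ht. apply D_opp. apply Dw. lra.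
    - intros t ht. rewrite Rabs_Ropp. apply HM. lra.
    - intros t ht. assert (H1 := HM t ltac:(lra)). apply Rabs_def2 in H1.
      assert (H2 := Hzt t ltac:(lra)). lra. }
  assert (Hc0 : 0 <= w 0).
  { assert (H := Hz 0 (Rle_refl 0)). rewrite Hbc' in H. nra. }
  pose (Phi := fun t => exp ((1-a)*t) * (3*(w1 t*w1 t) + (-2*a)*(w t*w1 t) + (-(a*a))*(w t*w t))
                       + a*(exp (-a*t) * (w t*w t*w t))).
  pose (dPhi := fun t => (a-3)*exp((1-a)*t)*((w1 t - a*w t)*(w1 t - a*w t))).
  assert (DPhi : forall t, 0 < t -> is_derive Phi t (dPhi t)).
  { intros t ht. unfold Phi, dPhi.
    assert (D1 := Dw t ht). assert (D2 := Dw1 t ht).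
    eapply D_eq. apply D_plus. apply D_mult. apply D_exp.
    apply D_plus. apply D_plus. apply is_derive_scal. apply D_mult; eauto.
    apply is_derive_scal. apply D_mult; eauto. apply is_derive_scal. apply D_mult; eauto.
    apply is_derive_scal. apply D_mult. apply D_exp. apply D_mult. apply D_mult; eauto. eauto.
    rewrite Hw2 by lra.
    replace (exp (-a*t)) with (exp ((1-a)*t) * exp (-t)) by (rewrite <- exp_plus; f_equal; ring).
    set (E1 := exp ((1-a)*t)). set (E2 := exp (-t)). set (u := w t). set (v := w1 t). clearbody E1 E2 u v. field. }
  assert (PPhi : forall t, 0 < t -> 0 <= dPhi t).
  { intros t ht. unfold dPhi. assert (0 < exp ((1-a)*t)) by apply exp_pos.
    apply Rmult_le_pos. apply Rmult_le_pos; lra. apply Rle_0_sqr. }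
  assert (RCPhi : filterlim Phi (at_right 0) (locally (Phi 0))).
  { unfold Phi.
    apply rlim_eq with (1 * (3*(w1 0*w1 0) + (-2*a)*(w 0*w1 0) + (-(a*a))*(w 0*w 0))
                       + a*(1 * (w 0*w 0*w 0))).
    apply rlim_plus. apply rlim_mult. apply rlim_exp.
    apply rlim_plus. apply rlim_plus.
    apply rlim_mult. apply rlim_const. apply rlim_mult; auto.
    apply rlim_mult. apply rlim_const. apply rlim_mult; auto.
    apply rlim_mult. apply rlim_const. apply rlim_mult; auto.
    apply rlim_mult. apply rlim_const. apply rlim_mult. apply rlim_exp.
    apply rlim_mult. apply rlim_mult; auto. auto.
    rewrite !Rmult_0_r, exp_0. ring. }
  assert (MPhi := mono_all Phi dPhi DPhi PPhi RCPhi).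
  assert (Hc : w 0 = 0).
  { destruct (Rle_lt_or_eq_dec 0 (w 0) Hc0) as [Hpos|]; [exfalso|auto].
    set (c := w 0) in *.
    set (K := a * (c*c*c)).
    assert (HK : 0 < K) by (unfold K; assert (0 < c*c*c) by (repeat apply Rmult_lt_0_compat; lra); nra).
    assert (HP0 : Phi 0 = K).
    { unfold Phi, K. rewrite !Rmult_0_r, exp_0. rewrite Hbc'. fold c. ring. }
    set (eps := Rmin 1 (K/(2*a))).
    assert (Ee1 : eps <= 1) by apply Rmin_l.
    assert (Ee2 : eps <= K/(2*a)) by apply Rmin_r.
    assert (Ee3 : 0 < eps) by (apply Rmin_pos; [lra|apply Rdiv_lt_0_compat; lra]).
    assert (Ee4 : a * eps <= K/2).
    { apply Rmult_le_compat_l with (r := a) in Ee2; [|lra].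
      replace (a * (K/(2*a))) with (K/2) in Ee2 by (field; lra). lra. }
    destruct (lim_inf w Hlim eps Ee3) as [M HM].
    set (T := Rmax M 0 + 1 + 2*(3+2*a)/K).
    assert (T0 : 0 < 2*(3+2*a)/K) by (apply Rdiv_lt_0_compat; lra).
    assert (T1 : M < T) by (unfold T; assert (H := Rmax_l M 0); lra).
    assert (T2 : 1 < T) by (unfold T; assert (H := Rmax_r M 0); lra).
    apply (drift w w1 T 1); try lra.
    - intros t ht. apply Dw. lra.
    - intros t ht. assert (H := HM t ltac:(lra)). lra.
    - intros t ht. destruct (Rle_lt_dec (w1 t) 1) as [Hle|]; auto. exfalso.
      assert (Hwt := HM t ltac:(lra)). apply Rabs_def2 in Hwt.
      assert (Hzt := Hz t ltac:(lra)).
      assert (HPt := MPhi 0 t (Rle_refl 0) ltac:(lra)). rewrite HP0 in HPt. unfold Phi in HPt.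
      set (X := exp ((1-a)*t)) in *. set (Y := exp (-a*t)) in *.
      set (P := 3*(w1 t*w1 t) + (-2*a)*(w t*w1 t) + (-(a*a))*(w t*w t)) in *.
      assert (HY : Y <= 1).
      { assert (E := exp_inv_id (a*t)). replace (-(a*t)) with (-a*t) in E by ring. fold Y in E.
        assert (H1 := exp_ineq1_le (a*t)). assert (0 < Y) by (unfold Y; apply exp_pos). assert (0 <= a*t) by (apply Rmult_le_pos; lra). nra. }
      assert (HY0 : 0 < Y) by (unfold Y; apply exp_pos).
      assert (HX0 : 0 < X) by (unfold X; apply exp_pos).
      assert (HX : X * (1 + t) <= 1).
      { assert (E := exp_inv_id ((a-1)*t)). replace (-((a-1)*t)) with ((1-a)*t) in E by ring. fold X in E.
        assert (H1 := exp_ineq1_le ((a-1)*t)). assert (0 <= (a-2)*t) by (apply Rmult_le_pos; lra).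
        assert (H2 : 1 + t <= exp ((a-1)*t)) by nra. rewrite <- E, (Rmult_comm (exp _) X). apply Rmult_le_compat_l; lra. }
      assert (Hw3 : w t * w t * w t <= eps).
      { assert (Habs : Rabs (w t) < eps) by (apply Rabs_def1; lra).
        assert (H3 : Rabs (w t * w t * w t) <= Rabs (w t)).
        { rewrite !Rabs_mult. assert (0 <= Rabs (w t)) by apply Rabs_pos. nra. }
        assert (H4 := Rle_abs (w t * w t * w t)). lra. }
      assert (Hcub : a * (Y * (w t * w t * w t)) <= K/2).
      { assert (Y * (w t * w t * w t) <= eps).
        { destruct (Rle_lt_dec 0 (w t * w t * w t)). nra. nra. }
        nra. }
      assert (HXP : K/2 <= X * P) by lra.
      assert (HPb : P <= 3 + 2*a).
      { unfold P. assert (w1 t * w1 t <= 1) by nra.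
        assert (Hab : Rabs (w t * w1 t) <= 1).
        { rewrite Rabs_mult. assert (Rabs (w t) <= 1) by (apply Rabs_le; lra).
          assert (Rabs (w1 t) <= 1) by (apply Rabs_le; lra).
          assert (0 <= Rabs (w t)) by apply Rabs_pos. assert (0 <= Rabs (w1 t)) by apply Rabs_pos.
          replace 1 with (1*1) by ring. apply Rmult_le_compat; lra. }
        apply Rabs_le_between in Hab.
        assert (-2*a*(w t * w1 t) <= 2*a) by nra.
        assert (0 <= a*a*(w t*w t)) by nra. nra. }
      assert (HXP2 : X * P <= X * (3 + 2*a)) by (apply Rmult_le_compat_l; lra).
      assert (Ht2 : 2*(3+2*a)/K <= t) by (unfold T in ht; assert (H := Rmax_r M 0); lra).
      assert (Ht3 : 2*(3+2*a) <= K * t).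
      { apply Rmult_le_compat_l with (r := K) in Ht2; [|lra].
        replace (K * (2*(3+2*a)/K)) with (2*(3+2*a)) in Ht2 by (field; lra). lra. }
      nra. }
  assert (Hz0 : forall t, 0 <= t -> w1 t + w t = 0).
  { intros t ht. assert (H := MG 0 t (Rle_refl 0) ht). unfold G in H.
    rewrite Hbc', Hc, Rmult_0_r, exp_0 in H.
    assert (Ep := exp_pos (-a*t)). assert (H2 := Hz t ht). nra. }
  intros t ht. destruct (Req_dec t 0) as [->|Hne]; auto.
  assert (htp : 0 < t) by lra.
  assert (Hloc : locally t (fun s => w1 s = - w s)).
  { exists (mkposreal t htp). intros s Hs.
    unfold ball in Hs; simpl in Hs; unfold AbsRing_ball, abs, minus, plus, opp in Hs; simpl in Hs.
    apply Rabs_def2 in Hs. assert (H := Hz0 s ltac:(lra)). lra. }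
  assert (D1 := is_derive_ext_loc w1 (fun s => - w s) t (w2 t) Hloc (Dw1 t htp)).
  assert (D2 := D_opp w t (w1 t) (Dw t htp)).
  apply is_derive_unique in D1. apply is_derive_unique in D2.
  assert (E : w2 t = w t) by (assert (H := Hz0 t ht); lra).
  assert (H := Hw2 t ht). assert (H1 := Hz0 t ht).
  assert (Ep := exp_pos (-t)).
  assert (H3 : a/2*exp(-t)*(w t*w t) = 0) by nra.
  assert (H4 : w t * w t = 0).
  { apply Rmult_integral in H3. destruct H3 as [H3|]; auto.
    apply Rmult_integral in H3. destruct H3; lra. }
  nra.
Qed.
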